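(* For $e\in\mathbf{I}_n(\underline{12}0)$ define its parameters $(p,q)$ by $p=|\{k: e_1\ldots e_nk\in\mathbf{I}_{n+1}(\underline{12}0),\ k>e_n\}|=n-e_n$ and $q=|\{k: e_1\ldots e_nk\in\mathbf{I}_{n+1}(\underline{12}0),\ k\le e_n\}|$. Then the unique element of $\mathbf{I}_1(\underline{12}0)$ has parameters $(1,1)$, and for every $e\in\mathbf{I}_n(\underline{12}0)$ with parameters $(p,q)$, the multiset of parameters of the sequences $e_1\ldots e_nk\in\mathbf{I}_{n+1}(\underline{12}0)$ (over all admissible $k$) is $$\{(p,2),(p-1,3),\ldots,(1,p+1),\ (p+1,q),(p+2,q-1),\ldots,(p+q,1)\}.$$ That is, $\underline{12}0$-avoiding inversion sequences grow according to the succession rule with root $(1,1)$ and $(p,q)\leadsto (p,2),(p-1,3),\ldots,(1,p+1),(p+1,q),(p+2,q-1),\ldots,(p+q,1)$.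
   Context: An inversion sequence of length $n$ is $e=e_1\ldots e_n$ with $0\le e_i<i$; $\mathbf{I}_n$ is their set. $\mathbf{I}_n(\underline{12}0)$ is the set of $e\in\mathbf{I}_n$ with no indices $2\le i<j\le n$ such that $e_j<e_{i-1}<e_i$. *)

(* Defs.v *)
(* Inversion sequences are represented as [seq nat], 0-indexed:
   e = e_1 ... e_n is the list [:: e_1; ...; e_n], so nth 0 e i = e_{i+1}. *)
From mathcomp Require Import all_boot.
Set Implicit Arguments. Unset Strict Implicit. Unset Printing Implicit Defensive.

(* e is an inversion sequence: 0 <= e_i < i, i.e. (0-indexed) nth 0 e i <= i. *)
Definition is_inv (e : seq nat) : bool :=
  all (fun i => nth 0 e i <= i) (iota 0 (size e)).

(* e avoids the vincular pattern 12_0 (underlined 12): there are no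
   indices 2 <= i < j <= n (1-indexed) with e_j < e_{i-1} < e_i.
   0-indexed: no a, j with a+1 < j < size e and e[j] < e[a] < e[a+1]. *)
Definition avoids120 (e : seq nat) : bool :=
  all (fun a =>
         all (fun j => ~~ ((nth 0 e j < nth 0 e a) && (nth 0 e a < nth 0 e a.+1)))
             (iota a.+2 (size e - a.+2)))
      (iota 0 (size e)).

Definition I120 (n : nat) (e : seq nat) : bool :=
  [&& size e == n, is_inv e & avoids120 e].

(* the admissible k with e_1 ... e_n k in I_{n+1}(12_0)
   (any such k satisfies k <= n, so iota 0 n.+1 covers all candidates) *)
Definition children (e : seq nat) : seq nat :=
  [seq k <- iota 0 (size e).+1 | I120 (size e).+1 (rcons e k)].

Definition params (e : seq nat) : nat * nat :=
  (count (fun k => last 0 e < k) (children e),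
   count (fun k => k <= last 0 e) (children e)).

(* Main.v *)
Require Import Defs.
From mathcomp Require Import all_boot.
From mathcomp Require Import zify.
Set Implicit Arguments. Unset Strict Implicit.

Definition mm (e : seq nat) :=
  \max_(a < (size e).-1 | nth 0 e a < nth 0 e a.+1) nth 0 e a.

Lemma is_invP e : reflect (forall i, i < size e -> nth 0 e i <= i) (is_inv e).
Proof.
apply: (iffP allP) => H i.
- move=> Hi; apply: H; rewrite mem_iota; lia.
- rewrite mem_iota => /andP[_ Hi]; apply: H; lia.
Qed.

Lemma avoidsP e : reflect (forall a j, a.+1 < j -> j < size e ->
   ~~((nth 0 e j < nth 0 e a) && (nth 0 e a < nth 0 e a.+1))) (avoids120 e).
Proof.
apply: (iffP allP).
- move=> H a j h1 h2.
  have Hx : a \in iota 0 (size e) by rewrite mem_iota; lia.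
  move/allP: (H a Hx); apply; rewrite mem_iota; lia.
- move=> H a _; apply/allP => j; rewrite mem_iota => /andP[h1 h2]; apply: H; lia.
Qed.

Lemma rcons_inv e k : is_inv (rcons e k) = is_inv e && (k <= size e).
Proof.
apply/is_invP/andP.
- move=> H; split.
    apply/is_invP => i hi; have := H i; rewrite size_rcons nth_rcons hi; apply; lia.
  have := H (size e); rewrite size_rcons nth_rcons ltnn eqxx; apply; lia.
- case=> [/is_invP Hi Hk] i; rewrite size_rcons nth_rcons ltnS leq_eqVlt.
  case/orP=> [/eqP->|hi]; first by rewrite ltnn eqxx.
  by rewrite hi; apply: Hi.
Qed.

Lemma rcons_avoid e k : avoids120 (rcons e k) = avoids120 e && (mm e <= k).
Proof.
apply/avoidsP/andP.
- move=> H; split.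
    apply/avoidsP => a j h1 h2.
    have ha : a < size e by lia.
    have ha1 : a.+1 < size e by lia.
    have := H a j h1; rewrite size_rcons !nth_rcons ha ha1 h2; apply; lia.
  apply/bigmax_leqP => -[a ha] /= asc.
  have ha' : a < size e by lia.
  have ha1 : a.+1 < size e by lia.
  have := H a (size e); rewrite !nth_rcons ltnn eqxx ha' ha1 asc andbT -leqNgt size_rcons.
  apply; lia.
- case=> [/avoidsP Ha /bigmax_leqP Hm] a j h1; rewrite size_rcons ltnS leq_eqVlt.
  move=> hj0; have ha : a < size e by case/orP: hj0 => [/eqP|]; lia.
  case/orP: hj0 => [/eqP Ej|hj]; first subst j.
    have ha1 : a.+1 < size e by lia.
    have ha2 : a < (size e).-1 by lia.
    rewrite !nth_rcons ltnn eqxx ha ha1; apply/negP => /andP[hk asc].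
    have := Hm (Ordinal ha2) asc => /=; lia.
  have ha1 : a.+1 < size e by lia.
  by rewrite !nth_rcons hj ha ha1; apply: Ha.
Qed.

Lemma I120_rcons e n k : I120 n e -> I120 n.+1 (rcons e k) = (k <= n) && (mm e <= k).
Proof.
case/and3P=> /eqP He Hi Ha.
by rewrite /I120 size_rcons He eqxx rcons_inv rcons_avoid Hi Ha He.
Qed.

Lemma mm_le_last e n : 1 <= n -> I120 n e -> mm e <= last 0 e.
Proof.
move=> n1 /and3P[/eqP He _ /avoidsP Ha].
apply/bigmax_leqP => -[a ha] /= asc; rewrite -nth_last.
case: (ltngtP a.+1 (size e).-1) => h.
- have := Ha a (size e).-1 h (_ : _ < size e); rewrite asc andbT -leqNgt; apply; lia.
- lia.
- by rewrite -h; apply: ltnW.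
Qed.

Lemma last_le e n : 1 <= n -> I120 n e -> last 0 e <= n.-1.
Proof.
move=> n1 /and3P[/eqP He /is_invP Hi _].
rewrite -nth_last He; apply: Hi; lia.
Qed.

Lemma mm_rcons e k n : size e = n.+1 ->
  mm (rcons e k) = maxn (mm e) (if last 0 e < k then last 0 e else 0).
Proof.
move=> He; rewrite /mm size_rcons He /= big_mkcond big_ord_recr /= -big_mkcond.
have -> : nth 0 (rcons e k) n = last 0 e by rewrite nth_rcons He ltnSn -nth_last He.
rewrite nth_rcons He ltnn eqxx.
congr maxn.
apply: eq_big => [i|i _] /=; have := ltn_ord i => hi.
  have h1 : i < size e by rewrite He; lia.
  have h2 : i.+1 < size e by rewrite He; lia.
  by rewrite !nth_rcons h1 h2.
have h1 : i < size e by rewrite He; lia.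
by rewrite !nth_rcons h1.
Qed.

Lemma filter_ge m N : m <= N -> [seq k <- iota 0 N | m <= k] = iota m (N - m).
Proof.
move=> mN; rewrite -{1}(subnKC mN) iotaD filter_cat add0n.
rewrite (@eq_in_filter _ _ pred0 (iota 0 m)) ?filter_pred0; last first.
  by move=> x; rewrite mem_iota /=; lia.
rewrite (@eq_in_filter _ _ predT) ?filter_predT //.
by move=> x; rewrite mem_iota /=; lia.
Qed.

Lemma children_split e n : 1 <= n -> I120 n e ->
  children e = iota (mm e) ((last 0 e).+1 - mm e) ++ iota (last 0 e).+1 (n - last 0 e).
Proof.
move=> n1 He.
have h1 := mm_le_last n1 He.
have h2 := last_le n1 He.
have Hs : size e = n by case/and3P: He => /eqP.
rewrite /children Hs.
rewrite (@eq_in_filter _ _ (fun k => mm e <= k)); last first.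
  by move=> k; rewrite mem_iota I120_rcons // => /andP[_ hk]; rewrite -ltnS hk.
rewrite filter_ge; last by lia.
have -> : n.+1 - mm e = ((last 0 e).+1 - mm e) + (n - last 0 e) by lia.
by rewrite iotaD; congr (_ ++ iota _ _); lia.
Qed.

Lemma params_eq e n : 1 <= n -> I120 n e ->
  params e = (n - last 0 e, last 0 e + 1 - mm e).
Proof.
move=> n1 He.
have h1 := mm_le_last n1 He.
have h2 := last_le n1 He.
rewrite /params (children_split n1 He) !count_cat; congr (_, _).
  rewrite (@eq_in_count _ _ pred0 (iota (mm e) _)); last by move=> x; rewrite mem_iota /=; lia.
  rewrite (@eq_in_count _ _ predT (iota (last 0 e).+1 _)); last by move=> x; rewrite mem_iota /=; lia.
  rewrite count_pred0 count_predT size_iota; lia.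
rewrite (@eq_in_count _ _ predT (iota (mm e) _)); last by move=> x; rewrite mem_iota /=; lia.
rewrite (@eq_in_count _ _ pred0 (iota (last 0 e).+1 _)); last by move=> x; rewrite mem_iota /=; lia.
rewrite count_pred0 count_predT size_iota; lia.
Qed.

Lemma rev_iota1 q m : rev (iota 1 q) = [seq m + q - k | k <- iota m q].
Proof.
elim: q m => [|q IH] m //.
have := iotaD 1 q 1; rewrite addn1 => ->; rewrite rev_cat /= (IH m.+1) /=; congr (_ :: _); first lia.
by apply: eq_map => k; lia.
Qed.

Lemma perm_eq_map_in (S : eqType) (T : eqType) (f g : S -> T) s :
  {in s, f =1 g} -> perm_eq (map f s) (map g s).
Proof. by move/eq_in_map => ->; exact: perm_refl. Qed.

Theorem proposition3p3 :
  (forall e : seq nat, I120 1 e -> e = [:: 0] /\ params e = (1, 1)) /\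
  (I120 1 [:: 0]) /\
  (forall (n : nat) (e : seq nat), 1 <= n -> I120 n e ->
     let p := (params e).1 in
     let q := (params e).2 in
     p = n - last 0 e /\
     perm_eq [seq params (rcons e k) | k <- children e]
             ([seq (p + 1 - i, i + 1) | i <- iota 1 p] ++
              [seq (p + i, q + 1 - i) | i <- iota 1 q])).
Proof.
split.
  case=> [|x [|y s]] // /and3P[_ /is_invP Hi _].
  have := Hi 0 isT; rewrite leqn0 /= => /eqP ->; split=> //.
split; first by [].
move=> n e n1 He p q.
have h1 := mm_le_last n1 He.
have h2 := last_le n1 He.
have Hs : size e = n by case/and3P: He => /eqP.
have Hp : p = n - last 0 e by rewrite /p (params_eq n1 He).
have Hq : q = last 0 e + 1 - mm e by rewrite /q (params_eq n1 He).
split=> //.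
have Hc : forall k, k \in children e -> params (rcons e k) =
    (n.+1 - k, k + 1 - maxn (mm e) (if last 0 e < k then last 0 e else 0)).
  move=> k; rewrite /children mem_filter Hs => /andP[Hk _].
  case: n Hs n1 {Hp h2 He} Hk => [|n'] // Hs _ Hk.
  by rewrite (params_eq _ Hk) // last_rcons (mm_rcons _ Hs).
have Hsp := children_split n1 He.
rewrite Hsp map_cat.
set l := last 0 e in h1 h2 Hp Hq Hc Hsp *.
set m := mm e in h1 h2 Hp Hq Hc Hsp *.
rewrite perm_catC; apply: perm_cat.
  rewrite Hp -(addn1 l) iotaDl -map_comp.
  apply: perm_eq_map_in => i; rewrite mem_iota => hi /=.
  rewrite Hc; last by rewrite Hsp mem_cat !mem_iota; apply/orP; right; lia.
  rewrite (_ : l < l + i); last by lia.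
  congr (_, _); lia.
rewrite perm_sym -(perm_rev (map _ (iota 1 q))) -map_rev Hp Hq (rev_iota1 _ m) -map_comp !addn1.
apply: perm_eq_map_in => k; rewrite mem_iota => hk /=.
rewrite Hc; last by rewrite Hsp mem_cat !mem_iota; apply/orP; left; lia.
rewrite (_ : l < k = false); last by lia.
congr (_, _); lia.
Qed.
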